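(* Let $q$ be a prime power. (i) Let $C$ be an $[n,k,d]$ linear code over $\mathbb{F}_q$ whose Euclidean hull $C\cap C^{\perp_E}$ has dimension $l$. If $l<d$, then there exists a set $T$ of $l$ coordinate positions such that the punctured code $C^T$ of $C$ on $T$ is a Euclidean LCD $[n-l,k,d^*]$ code with $d^*\ge d-l$. (ii) The same holds for an $[n,k,d]$ linear code over $\mathbb{F}_{q^2}$ whose Hermitian hull $C\cap C^{\perp_H}$ has dimension $l$, with ''Euclidean LCD'' replaced by ''Hermitian LCD''.
   Context: An $[n,k,d]$ linear code over a finite field $F$ is a $k$-dimensional subspace of $F^n$ with minimum nonzero Hamming weight $d$. Euclidean inner product on $\mathbb{F}_q^n$: $\langle x,y\rangle_E=\sum x_iy_i$; Hermitian inner product on $\mathbb{F}_{q^2}^n$: $\langle x,y\rangle_H=\sum x_iy_i^q$; $C^{\perp_E},C^{\perp_H}$ are the corresponding duals. The hull of $C$ is $C\cap C^{\perp}$; $C$ is LCD if its hull is $\{0\}$. For a set $T$ of coordinate positions, the punctured code $C^T$ is obtained by deleting the coordinates in $T$ from every codeword of $C$. *)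

(* Defs.v *)
From HB Require Import structures.
From mathcomp Require Import all_boot all_order all_algebra.
Set Implicit Arguments. Unset Strict Implicit. Unset Printing Implicit Defensive.
Import GRing.Theory.
Local Open Scope ring_scope.

Section Codes.
Variable F : finFieldType.

Definition wt n (x : 'rV[F]_n) : nat := #|[set i | x 0 i != 0]|.

Definition min_dist n (C : {vspace 'rV[F]_n}) (d : nat) : Prop :=
  (exists2 x, x \in C & (x != 0) /\ wt x = d) /\
  (forall x, x \in C -> x != 0 -> (d <= wt x)%N).

Definition ipE n (x y : 'rV[F]_n) : F := \sum_i x 0 i * y 0 i.
(* Hermitian inner product on F_{q^2}^n : sum x_i y_i^q *)
Definition ipH (q : nat) n (x y : 'rV[F]_n) : F := \sum_i x 0 i * (y 0 i) ^+ q.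

Definition dual_wrt n (form : 'rV[F]_n -> 'rV[F]_n -> F) (C : {vspace 'rV[F]_n})
  : {vspace 'rV[F]_n} :=
  <<[seq y <- enum 'rV[F]_n | [forall x : 'rV[F]_n, (x \in C) ==> (form x y == 0%R)]]>>%VS.

Definition dualE n (C : {vspace 'rV[F]_n}) := dual_wrt (@ipE n) C.
Definition dualH (q : nat) n (C : {vspace 'rV[F]_n}) := dual_wrt (@ipH q n) C.

Definition hullE n (C : {vspace 'rV[F]_n}) := (C :&: dualE C)%VS.
Definition hullH q n (C : {vspace 'rV[F]_n}) := (C :&: dualH q C)%VS.

(* puncturing: delete the coordinates in T (remaining ones kept in increasing order) *)
Definition punct_vec n (T : {set 'I_n}) (x : 'rV[F]_n) : 'rV[F]_#|~: T| :=
  \row_(j < #|~: T|) x 0 (enum_val j).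

Definition puncture n (T : {set 'I_n}) (C : {vspace 'rV[F]_n}) : {vspace 'rV[F]_#|~: T|} :=
  (linfun (punct_vec T) @: C)%VS.

End Codes.

(* Main.v *)
Require Import Defs.
From HB Require Import structures.
From mathcomp Require Import all_boot all_order all_algebra all_field.
Set Implicit Arguments. Unset Strict Implicit. Unset Printing Implicit Defensive.
Import GRing.Theory.
Local Open Scope ring_scope.

Section Lin.
Variable F : finFieldType.

Fact punct_vec_is_linear n (T : {set 'I_n}) : linear (@punct_vec F n T).
Proof.
move=> a x y; apply/rowP=> j; rewrite !mxE.
by [].
Qed.
HB.instance Definition _ n T := GRing.isLinear.Build F 'rV[F]_n _ _ (@punct_vec F n T)
  (@punct_vec_is_linear n T).

Definition sel n (T : {set 'I_n}) (x : 'rV[F]_n) : 'rV[F]_#|T| :=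
  \row_(j < #|T|) x 0 (enum_val j).
Fact sel_is_linear n (T : {set 'I_n}) : linear (@sel n T).
Proof. by move=> a x y; apply/rowP=> j; rewrite !mxE. Qed.
HB.instance Definition _ n T := GRing.isLinear.Build F 'rV[F]_n _ _ (@sel n T)
  (@sel_is_linear n T).

Definition coordf n (i : 'I_n) (x : 'rV[F]_n) : F^o := x 0 i.
Fact coordf_is_linear n i : linear (@coordf n i).
Proof. by move=> a x y; rewrite /coordf !mxE. Qed.
HB.instance Definition _ n i := GRing.isLinear.Build F 'rV[F]_n F^o _ (@coordf n i)
  (@coordf_is_linear n i).

Lemma sel0P n (T : {set 'I_n}) x : (sel T x == 0) = [forall i in T, x 0 i == 0].
Proof.
apply/idP/forall_inP => [/eqP/rowP H i iT|H].
  by move: (H (enum_rank_in iT i)); rewrite !mxE enum_rankK_in // => ->.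
apply/eqP; apply/rowP=> j; rewrite !mxE; apply/eqP/H; apply: enum_valP.
Qed.

Definition KT n (H : {vspace 'rV[F]_n}) (T : {set 'I_n}) :=
  (H :&: lker (linfun (@sel n T)))%VS.

Lemma memKT n H (T : {set 'I_n}) x :
  (x \in KT H T) = (x \in H) && [forall i in T, x 0 i == 0].
Proof. by rewrite memv_cap memv_ker lfunE /= sel0P. Qed.

Lemma KT_step n (H : {vspace 'rV[F]_n}) T x i :
  x \in KT H T -> x 0 i != 0 -> \dim (KT H (i |: T)) = (\dim (KT H T)).-1.
Proof.
move=> xK xi.
have E : KT H (i |: T) = (KT H T :&: lker (linfun (@coordf n i)))%VS.
  apply/vspaceP=> y; rewrite memv_cap memv_ker lfunE /= !memKT /coordf.
  apply/idP/idP.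
    case/andP=> yH /forall_inP Y; rewrite yH /=; apply/andP; split.
      by apply/forall_inP=> j jT; apply: Y; rewrite !inE jT orbT.
    by apply: Y; rewrite setU11.
  case/andP=> /andP[yH /forall_inP Y] yi; rewrite yH /=.
  by apply/forall_inP=> j; rewrite !inE => /orP[/eqP->|/Y].
have D := limg_ker_dim (linfun (@coordf n i)) (KT H T).
have D1 : \dim (linfun (@coordf n i) @: KT H T) = 1%N.
  apply/eqP; rewrite eqn_leq; apply/andP; split.
    by rewrite -[X in (_ <= X)%N](dimvf (F^o)); apply: dimvS; apply: subvf.
  rewrite lt0n dimv_eq0; apply/eqP=> Z.
  have := memv_img (linfun (@coordf n i)) xK; rewrite Z memv0 lfunE /coordf.
  by rewrite (negbTE xi).
by rewrite E -D D1 addn1.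
Qed.

Lemma greedy n (H : {vspace 'rV[F]_n}) m : (m <= \dim H)%N ->
  exists T : {set 'I_n}, #|T| = m /\ \dim (KT H T) = (\dim H - m)%N.
Proof.
elim: m => [|m IH] lt.
  exists set0; split; first by rewrite cards0.
  have -> : KT H set0 = H.
    by apply/vspaceP=> y; rewrite memKT; case: (y \in H) => //=; apply/forall_inP=> i; rewrite inE.
  by rewrite subn0.
have [T [cT dT]] := IH (ltnW lt).
have : KT H T != 0%VS by rewrite -dimv_eq0 dT subn_eq0 -ltnNge.
move=> KnZ; have xK := memv_pick (KT H T); set x := vpick _ in xK.
have xnz : x != 0 by rewrite /x vpick0.
have : [exists i, x 0 i != 0].
  apply/existsP; case: (pickP (fun i => x 0 i != 0)) => [i xi|Z]; first by exists i.
  case/negP: xnz; apply/eqP; apply/rowP=> i; rewrite mxE.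
  by move: (Z i) => /= /negbFE/eqP.
case/existsP=> i xi.
have iT : i \notin T.
  apply/negP=> iT; move: xK; rewrite memKT => /andP[_ /forall_inP Z].
  by move: (Z i iT); rewrite (negbTE xi).
exists (i |: T); split; first by rewrite cardsU1 iT cT.
by rewrite (KT_step xK xi) dT subnS.
Qed.

Lemma key n (H : {vspace 'rV[F]_n}) : exists T : {set 'I_n},
  [/\ #|T| = \dim H,
      (forall h, h \in H -> (forall i, i \in T -> h 0 i = 0) -> h = 0) &
      (forall j, j \in T -> exists2 h, h \in H & forall i, i \in T -> h 0 i = (i == j)%:R)].
Proof.
have [T [cT dT]] := greedy (leqnn (\dim H)).
rewrite subnn in dT.
have K0 : KT H T = 0%VS by apply/eqP; rewrite -dimv_eq0 dT.
have inj : forall h, h \in H -> (forall i, i \in T -> h 0 i = 0) -> h = 0.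
  move=> h hH hT; apply/eqP; rewrite -memv0 -K0 memKT hH /=.
  by apply/forall_inP=> i iT; rewrite hT.
exists T; split => // j jT.
have D := limg_ker_dim (linfun (@sel n T)) H.
rewrite -/(KT H T) dT add0n in D.
have Img : (linfun (@sel n T) @: H)%VS = fullv.
  apply/eqP; rewrite eqEdim subvf D dimvf /= dim_matrix mul1r cT leqnn.
  done.
have := memvf (delta_mx 0 (enum_rank_in jT j) : 'rV[F]_#|T|).
rewrite -Img => /memv_imgP [h hH hE].
exists h => // i iT.
have := congr1 (fun M : 'rV[F]_#|T| => M 0 (enum_rank_in jT i)) hE.
rewrite lfunE /= !mxE enum_rankK_in // eqxx /= => <-.
case: (i =P j) => [->|nij]; first by rewrite eqxx.
case: (enum_rank_in jT i =P enum_rank_in jT j) => // E.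
by case: nij; rewrite -(enum_rankK_in jT iT) E enum_rankK_in.
Qed.
End Lin.

Section Form.
Variable F : finFieldType.
Variable s : F -> F.
Hypothesis sD : {morph s : a b / a + b}.
Hypothesis sM : {morph s : a b / a * b}.
Hypothesis s0 : s 0 = 0.
Hypothesis sK : involutive s.

Definition ipS n (x y : 'rV[F]_n) : F := \sum_i x 0 i * s (y 0 i).

Lemma ipS_sym n (x y : 'rV[F]_n) : ipS y x = s (ipS x y).
Proof.
rewrite /ipS (big_morph s sD s0); apply: eq_bigr => i _.
by rewrite sM sK mulrC.
Qed.

Lemma ipS0 n (x : 'rV[F]_n) : ipS x 0 = 0.
Proof. by rewrite /ipS big1 // => i _; rewrite mxE s0 mulr0. Qed.

Lemma ipS_lin n (x y z : 'rV[F]_n) a : ipS x (a *: y + z) = s a * ipS x y + ipS x z.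
Proof.
rewrite /ipS mulr_sumr -big_split /=; apply: eq_bigr => i _.
by rewrite !mxE sD sM mulrDr mulrCA.
Qed.

Lemma mem_dual n (C : {vspace 'rV[F]_n}) y :
  (y \in dual_wrt (@ipS n) C) <-> (forall x, x \in C -> ipS x y = 0).
Proof.
split.
  move=> yD x xC; rewrite /dual_wrt in yD.
  set S := [seq _ <- _ | _] in yD.
  have -> := coord_span (X := in_tuple S) yD.
  apply: (big_ind (fun y => ipS x y = 0)); first exact: ipS0.
    move=> u v hu hv; have := ipS_lin x u v 1; rewrite scale1r => ->.
    by rewrite hu hv mulr0 addr0.
  move=> i _; have := ipS_lin x (S`_i) 0 (coord (in_tuple S) i y).
  rewrite addr0 ipS0 addr0 => ->.
  have : S`_i \in S by apply: mem_nth.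
  rewrite mem_filter => /andP[/forallP/(_ x) /implyP/(_ xC)/eqP -> _].
  by rewrite mulr0.
move=> H; apply: memv_span; rewrite mem_filter mem_enum andbT.
by apply/forallP=> x; apply/implyP=> xC; apply/eqP/H.
Qed.

Lemma punct_split n (T : {set 'I_n}) (x y : 'rV[F]_n) :
  ipS x y = ipS (punct_vec T x) (punct_vec T y) + \sum_(i in T) x 0 i * s (y 0 i).
Proof.
rewrite /ipS (bigID (mem T)) /= addrC; congr (_ + _).
rewrite (eq_bigl (fun i => i \in ~: T)); last by move=> i; rewrite inE.
rewrite big_enum_val /=.
by apply: eq_bigr => j _; rewrite !mxE.
Qed.


Lemma wt_punct n (T : {set 'I_n}) (c : 'rV[F]_n) :
  (wt c <= wt (punct_vec T c) + #|T|)%N.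
Proof.
rewrite /wt addnC.
set A := [set j | punct_vec T c 0 j != 0].
have sub : [set i | c 0 i != 0] \subset T :|: (enum_val @: A).
  apply/subsetP=> i; rewrite inE => ci.
  case iT: (i \in T); first by rewrite inE iT.
  have iCT : i \in ~: T by rewrite inE iT.
  rewrite inE iT /=; apply/imsetP; exists (enum_rank_in iCT i).
    by rewrite inE mxE enum_rankK_in.
  by rewrite enum_rankK_in.
apply: (leq_trans (subset_leq_card sub)).
rewrite -(card_imset A (@enum_val_inj _ (mem (~: T)))).
exact: leq_card_setU.
Qed.

Theorem main n k d l (C : {vspace 'rV[F]_n}) :
  \dim C = k -> min_dist C d -> \dim (C :&: dual_wrt (@ipS n) C)%VS = l -> (l < d)%N ->
      exists T : {set 'I_n},
        [/\ #|T| = l, #|~: T| = (n - l)%N,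
            (puncture T C :&: dual_wrt (@ipS _) (puncture T C))%VS = 0%VS,
            \dim (puncture T C) = k &
            exists2 dstar : nat, min_dist (puncture T C) dstar & (d - l <= dstar)%N].
Proof.
move=> dimC [[x0 x0C [x0nz _]] mind] dimH ltld.
set H := (C :&: dual_wrt (@ipS n) C)%VS in dimH.
have [T [cT inj dv]] := key H.
rewrite dimH in cT.
have pinj : forall c, c \in C -> punct_vec T c = 0 -> c = 0.
  move=> c cC pc; apply/eqP; apply/negPn/negP => cnz.
  have := mind c cC cnz => le.
  have : (wt c <= #|T|)%N.
    rewrite /wt; apply: subset_leq_card; apply/subsetP=> i; rewrite inE => ci.
    apply/negPn/negP => iT; have iCT : i \in ~: T by rewrite inE.
    move: (congr1 (fun M : 'rV[F]_#|~: T| => M 0 (enum_rank_in iCT i)) pc).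
    by rewrite !mxE enum_rankK_in //; move/eqP; rewrite (negbTE ci).
  rewrite cT => le2; have := leq_trans le le2; rewrite leqNgt ltld //.
have memP : forall y, y \in puncture T C -> exists2 c, c \in C & y = punct_vec T c.
  move=> y /memv_imgP [c cC ->]; exists c => //; by rewrite lfunE.
have memP2 : forall c, c \in C -> punct_vec T c \in puncture T C.
  by move=> c cC; have := memv_img (linfun (@punct_vec F n T)) cC; rewrite lfunE.
exists T; split.
- by [].
- have E := cardsC T; rewrite card_ord in E; rewrite -cT.
  by move: E; set a := #|T|; set b := #|~: T|; move=> <-; rewrite addKn.
- apply/eqP; rewrite -subv0; apply/subvP=> y; rewrite memv_cap => /andP[yP yD].
  have [c cC yc] := memP y yP; rewrite yc in yD *.
  have /mem_dual yD' := yD.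
  have cT0 : forall j, j \in T -> c 0 j = 0.
    move=> j jT; have [h hH hj] := dv j jT.
    move: hH; rewrite memv_cap => /andP[hC /mem_dual hD].
    have e1 : ipS h c = 0 by rewrite ipS_sym hD // s0.
    have := punct_split T h c; rewrite e1 yD' ?memP2 // add0r.
    rewrite (eq_bigr (fun i => (i == j)%:R * s (c 0 i))); last by move=> i iT; rewrite hj.
    rewrite (bigD1 j) //= eqxx mul1r big1 ?addr0; last first.
      by move=> i /andP[_ /negbTE->]; rewrite mul0r.
    by move=> /esym e; rewrite -[c 0 j]sK e s0.
  have cH : c \in H.
    rewrite memv_cap cC /=; apply/mem_dual => x xC.
    rewrite (punct_split T) yD' ?memP2 // add0r big1 // => i iT.
    by rewrite cT0 // s0 mulr0.
  by rewrite (inj c cH cT0) linear0 mem0v.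

- rewrite /puncture -dimC; apply: limg_dim_eq; apply/eqP; rewrite -subv0; apply/subvP=> x.
  rewrite memv_cap memv_ker lfunE => /andP[xC /eqP px].
  by rewrite (pinj x xC px) mem0v.
have ex : exists m, [exists x, [&& x \in puncture T C, x != 0 & wt x == m]].
  exists (wt (punct_vec T x0)); apply/existsP; exists (punct_vec T x0).
  rewrite memP2 // eqxx andbT /=; apply/negP=> /eqP /(pinj _ x0C) /eqP.
  by rewrite (negbTE x0nz).
have [m /existsP [y /and3P [yP ynz /eqP wy]] minm] := ex_minnP ex.
exists m.
  split; first by exists y.
  move=> z zP znz; apply: minm; apply/existsP; exists z.
  by rewrite zP znz eqxx.
have [c cC yc] := memP y yP.
have cnz : c != 0 by apply: contraNneq ynz => c0; rewrite yc c0 linear0.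
rewrite leq_subLR -wy yc addnC -cT.
exact: leq_trans (mind c cC cnz) (wt_punct T c).
Qed.

End Form.

Lemma herm_props (F : finFieldType) (q : nat) : #|F| = (q ^ 2)%N ->
  [/\ {morph (fun a : F => a ^+ q) : a b / a + b},
      {morph (fun a : F => a ^+ q) : a b / a * b},
      (0 : F) ^+ q = 0 & involutive (fun a : F => a ^+ q)].
Proof.
move=> cF.
have q0 : (0 < q)%N.
  rewrite lt0n; apply/eqP=> q0; move: (finNzRing_gt1 F); rewrite cF q0.
  by [].
split.
- move=> a b /=; apply: exprDn_pchar.
  have [p pp pc] := finPcharP F.
  have cp : #|F| = (p ^ logn p #|F|)%N := card_pprimeChar pc.
  have : (q %| p ^ logn p #|F|)%N by rewrite -cp cF dvdn_exp.
  case/(dvdn_pfactor _ _ pp) => e _ ->.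
  rewrite pnatX (pnatE _ pp) pc //.
- by move=> a b /=; rewrite exprMn.
- by rewrite expr0n; move: q0; rewrite lt0n => /negbTE ->.
- by move=> a /=; rewrite -exprM mulnn -cF expf_card.
Qed.

Theorem theorem3p3 :
  (* (i) Euclidean case over F_q, q = #|F| *)
  (forall (F : finFieldType) (n k d l : nat) (C : {vspace 'rV[F]_n}),
      \dim C = k -> min_dist C d -> \dim (hullE C) = l -> (l < d)%N ->
      exists T : {set 'I_n},
        [/\ #|T| = l, #|~: T| = (n - l)%N,
            hullE (puncture T C) = 0%VS,
            \dim (puncture T C) = k &
            exists2 dstar : nat, min_dist (puncture T C) dstar & (d - l <= dstar)%N])
  /\
  (* (ii) Hermitian case over F_{q^2} *)
  (forall (F : finFieldType) (q : nat), #|F| = (q ^ 2)%N ->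
   forall (n k d l : nat) (C : {vspace 'rV[F]_n}),
      \dim C = k -> min_dist C d -> \dim (hullH q C) = l -> (l < d)%N ->
      exists T : {set 'I_n},
        [/\ #|T| = l, #|~: T| = (n - l)%N,
            hullH q (puncture T C) = 0%VS,
            \dim (puncture T C) = k &
            exists2 dstar : nat, min_dist (puncture T C) dstar & (d - l <= dstar)%N]).
Proof.
split.
  move=> F n k d l C dC md dH ld.
  exact: (@main F (fun a => a) (fun _ _ => erefl) (fun _ _ => erefl) erefl
            (fun _ => erefl) n k d l C dC md dH ld).
move=> F q cF n k d l C dC md dH ld.
have [hD hM h0 hK] := herm_props cF.
exact: (@main F (fun a => a ^+ q) hD hM h0 hK n k d l C dC md dH ld).
Qed.
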